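(* Let $d\ge 2$, $m\ge 1$, and let the ancillae $A_1,\dots,A_{m}$ consecutively measure a prepared quantum system $Q$, so that the joint pure state of $Q A_1\cdots A_m$ is $$|\Psi\rangle=\sum_{x_1,\dots,x_m}\alpha^{(1)}_{x_1}U^{(2)}_{x_1x_2}\cdots U^{(m)}_{x_{m-1}x_m}\,|\widetilde{x}_m\rangle_Q|x_1\rangle_{A_1}\cdots|x_m\rangle_{A_m}.$$ Then the reduced density matrix $\rho(A_1\cdots A_m)=\mathrm{Tr}_Q|\Psi\rangle\langle\Psi|$ is a classical-quantum state of the form $$\rho(A_1\cdots A_m)=\sum_{x_m}q^{(m)}_{x_m}\,|\psi_{x_m}\rangle\langle\psi_{x_m}|\otimes|x_m\rangle\langle x_m|,$$ where $q^{(m)}$ is the probability distribution of outcomes of $A_m$ and each $|\psi_{x_m}\rangle$ is a normalized pure state of $A_1\cdots A_{m-1}$, and its joint entropy is contained only in the last device: $$S(A_1\cdots A_m)=S(A_m).$$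
   Context: $Q$ is a $d$-dimensional quantum system initially in the pure state $|Q\rangle=\sum_{x_1=1}^d\alpha^{(1)}_{x_1}|\widetilde{x}_1\rangle$ (''prepared'' state). For each $i$ an orthonormal basis $\{|\widetilde{x}_i\rangle\}_{x_i=1}^d$ of $Q$ is the basis measured by ancilla $A_i$, and $U^{(i)}_{x_{i-1}x_i}=\langle\widetilde{x}_i|\widetilde{x}_{i-1}\rangle$ ($i\ge2$) are the entries of a unitary $d\times d$ matrix. Each ancilla $A_i$ is a $d$-dimensional system with orthonormal basis $\{|x\rangle\}_{x=1}^d$, starting in a fixed state $|0\rangle$; the measurement by $A_i$ is the unitary $U_{QA_i}=\sum_{x}|\widetilde{x}_i\rangle\langle\widetilde{x}_i|\otimes U_x$ with $U_x|0\rangle=|x\rangle$, applied in the order $A_1,A_2,\dots$; this yields the displayed state $|\Psi\rangle$. The outcome distribution of $A_m$ is $q^{(m)}_{x_m}=\sum_{x_1,\dots,x_{m-1}}|\alpha^{(1)}_{x_1}|^2|U^{(2)}_{x_1x_2}|^2\cdots|U^{(m)}_{x_{m-1}x_m}|^2$. $S(X)=-\mathrm{Tr}\,\rho(X)\log_d\rho(X)$ denotes the von Neumann entropy (logarithm base $d$) of the reduced state of subsystem $X$. *)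

(* Defs.v *)
From HB Require Import structures.
From mathcomp Require Import all_boot all_order all_algebra.
From mathcomp Require Export spectral.
From mathcomp Require Import reals exp.
From mathcomp Require Export complex.
Set Implicit Arguments.
Unset Strict Implicit.
Unset Printing Implicit Defensive.
Import Order.TTheory GRing.Theory Num.Theory.
Local Open Scope ring_scope.

Section QDefs.
Variable R : realType.
Local Notation C := (R[i]).

(* For a basis matrix B, column j of B is the basis vector |j~> written in
   the fixed computational basis of Q; "B \is unitarymx" (mathcomp spectral.v)
   means the columns of B form an orthonormal basis of C^d. *)

(* ---------- consecutive measurements ----------
   d : dimension, n : m = n.+1 ancillae A_1 .. A_m (A_{k+1} <-> k : 'I_n.+1).
   B k : basis measured by A_{k+1}; (B k) q j = <q|j~_{k+1}> .
   alpha : coefficients of the prepared state in the basis B 0. *)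

(* U^{(k+2)}_{a b} = < b~_{k+2} | a~_{k+1} > for k : 'I_n *)
Definition Uent (d n : nat) (B : 'I_n.+1 -> 'M[C]_d) (k : 'I_n) (a b : 'I_d) : C :=
  \sum_(q < d) Num.conj (B (inord k.+1) q b) * B (inord k) q a.

Definition join_out (d n : nat) (z : {ffun 'I_n -> 'I_d}) (a : 'I_d)
  : {ffun 'I_n.+1 -> 'I_d} :=
  [ffun k : 'I_n.+1 => if unlift ord_max k is Some k' then z k' else a].

(* amplitude of |Psi> at |q>_Q |x_1>...|x_m>, x = join_out z a;
   the Q factor is |x~_m> written in the computational basis of Q *)
Definition Psi (d n : nat) (B : 'I_n.+1 -> 'M[C]_d) (alpha : 'I_d -> C)
  (q : 'I_d) (za : {ffun 'I_n -> 'I_d} * 'I_d) : C :=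
  let x := join_out za.1 za.2 in
  alpha (x ord0) * (\prod_(k < n) Uent B k (x (inord k)) (x (inord k.+1)))
  * B ord_max q (x ord_max).

Definition ptrace1 (T1 T2 : finType) (rho : T1 * T2 -> T1 * T2 -> C)
  : T2 -> T2 -> C :=
  fun u v => \sum_(t : T1) rho (t, u) (t, v).

Definition rhoPsi (d n : nat) (B : 'I_n.+1 -> 'M[C]_d) (alpha : 'I_d -> C)
  (u v : 'I_d * ({ffun 'I_n -> 'I_d} * 'I_d)) : C :=
  Psi B alpha u.1 u.2 * Num.conj (Psi B alpha v.1 v.2).

Definition rhoA (d n : nat) (B : 'I_n.+1 -> 'M[C]_d) (alpha : 'I_d -> C) :=
  ptrace1 (rhoPsi B alpha).

Definition rhoAm (d n : nat) (B : 'I_n.+1 -> 'M[C]_d) (alpha : 'I_d -> C) :=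
  ptrace1 (rhoA B alpha).

Definition qm (d n : nat) (B : 'I_n.+1 -> 'M[C]_d) (alpha : 'I_d -> C) (a : 'I_d) : C :=
  \sum_(z : {ffun 'I_n -> 'I_d})
    let x := join_out z a in
    `|alpha (x ord0)| ^+ 2 *
    \prod_(k < n) `|Uent B k (x (inord k)) (x (inord k.+1))| ^+ 2.

Definition mx_of (T : finType) (rho : T -> T -> C) : 'M[C]_#|T| :=
  \matrix_(i, j) rho (enum_val i) (enum_val j).

Definition eigenvalues (p : nat) (M : 'M[C]_p) : seq C :=
  sval (closed_field_poly_normal (char_poly M)).

(* t log_d t, with 0 log 0 = 0 *)
Definition xlogd (d : nat) (t : R) : R :=
  if t == 0 then 0 else t * (ln t / ln (d%:R)).

(* S = - Tr rho log_d rho = - sum_lambda lambda log_d lambda (eigenvalues of a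
   density matrix are real, we take their real part) *)
Definition vN_entropy (d : nat) (T : finType) (rho : T -> T -> C) : R :=
  - \sum_(l <- eigenvalues (mx_of rho)) xlogd d (complex.Re l).

End QDefs.

(* Main.v *)
Require Import Defs.
From HB Require Import structures.
From mathcomp Require Import all_boot all_order all_algebra.
From mathcomp Require Import reals exp complex.
From mathcomp Require Import ring.
Import Order.TTheory GRing.Theory Num.Theory.
Local Open Scope ring_scope.
Lemma sylv (F : comNzRingType) N d (V : 'M[F]_(N,d)) (W : 'M[F]_(d,N)) :
  'X^d * char_poly (V *m W) = 'X^N * char_poly (W *m V).
Proof.
pose Vp := map_mx polyC V; pose Wp := map_mx polyC W.
pose Mb := block_mx ('X%:M : 'M_N) Vp Wp 1%:M.
have h1 : \det Mb = char_poly (V *m W).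
  have -> : Mb = block_mx 1%:M Vp 0 1%:M *m block_mx ('X%:M - Vp *m Wp) 0 Wp 1%:M.
    rewrite mulmx_block. rewrite mul0mx. rewrite mulmx1. rewrite mul1mx.
    by rewrite !mul1mx !mul0mx !add0r subrK.
  rewrite det_mulmx det_ublock det_lblock !det1 !mulr1 mul1r.
  by rewrite /char_poly /char_poly_mx map_mxM.
have h2 : \det (block_mx 1%:M 0 (- Wp) ('X%:M : 'M_d) *m Mb) = 'X^N * char_poly (W *m V).
  rewrite mulmx_block !mul1mx !mul0mx !addr0 mulmx1 mulNmx scalar_mxC addNr.
  rewrite det_ublock /char_poly /char_poly_mx map_mxM addrC det_scalar mulNmx.
  by [].
by rewrite -h1 -h2 det_mulmx det_lblock det1 mul1r det_scalar.
Qed.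

Lemma prod_nseq0 (F: fieldType) k: \prod_(x <- nseq k (0:F)) ('X - x%:P) = 'X^k.
Proof. by elim: k => [|k IH]; rewrite ?big_nil ?expr0 // big_cons IH subr0 exprS. Qed.

Lemma sum_nseq0 (R : nmodType) (F : fieldType) (f : F -> R) k : f 0 = 0 ->
  \sum_(x <- nseq k 0) f x = 0.
Proof. by move=> f0; rewrite big1_seq // => x /andP[_]; rewrite mem_nseq => /andP[_ /eqP->]. Qed.
Section K.
Variable R : realType.
Local Notation C := (R[i]).

Lemma key (T : finType) d (V : T -> 'I_d -> C) (D : 'I_d -> C)
  (rho : T -> T -> C) (f : C -> R) :
  f 0 = 0 ->
  (forall a b, \sum_t (V t a)^* * V t b = (a == b)%:R) ->
  (forall u v, rho u v = \sum_a V u a * D a * (V v a)^*) ->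
  \sum_(l <- eigenvalues (mx_of rho)) f l = \sum_a f (D a).
Proof.
move=> f0 hV hrho.
pose Vm : 'M[C]_(#|T|, d) := \matrix_(i, j) V (enum_val i) j.
pose Dm := diag_mx (\row_a D a).
pose Wm := Dm *m map_mx Num.conj (trmx Vm).
have hM : mx_of rho = Vm *m Wm.
  apply/matrixP => i j; rewrite /Wm mul_diag_mx !mxE hrho; apply: eq_bigr => a _.
  by rewrite !mxE mulrA.
have hWV : Wm *m Vm = Dm.
  rewrite /Wm -mulmxA -[RHS]mulmx1; congr (_ *m _).
  apply/matrixP => a' b'; rewrite !mxE -hV.
  rewrite [RHS](reindex (@enum_val T predT)) /=; last first.
    by apply: onW_bij; exact: enum_val_bij.
  by apply: eq_bigr => i _; rewrite !mxE.
have cpM : char_poly (mx_of rho) = \prod_(x <- eigenvalues (mx_of rho)) ('X - x%:P).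
  rewrite /eigenvalues; case: closed_field_poly_normal => r /= hr.
  by rewrite {1}hr (monicP (char_poly_monic _)) scale1r.
have cpD : char_poly Dm = \prod_(a < d) ('X - (D a)%:P).
  rewrite char_poly_trig ?diag_mx_is_trig //; apply: eq_bigr => a _.
  by rewrite !mxE eqxx mulr1n.
have := @sylv _ _ _ Vm Wm; rewrite -hM hWV cpM cpD -!prod_nseq0 -!big_cat /=.
rewrite -(big_map D predT (fun x => 'X - x%:P)) -big_cat.
move/prod_XsubC_eq => hp.
have := perm_big (P := xpredT) (F := f) (op := +%R) (x := 0) _ hp.
rewrite !big_cat /= !(@sum_nseq0 _ _ f) // !add0r big_map => ->.
by [].
Qed.

Lemma conj_bool (bb : bool) : ((bb%:R : C)^* = bb%:R).
Proof. by case: bb; rewrite ?rmorph1 ?rmorph0. Qed.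

Lemma sum_delta2 d (a b : 'I_d) (x y : C) :
  \sum_c ((c == a)%:R * x)^* * ((c == b)%:R * y) = (a == b)%:R * (x^* * y).
Proof.
rewrite (bigD1 a) //= big1 => [|c /negbTE ca]; last by rewrite ca mul0r rmorph0 mul0r.
by rewrite eqxx addr0 rmorphM ?rmorph1 ?conj_bool eq_sym mul1r mulrCA.
Qed.

Lemma sum_delta d (F : 'I_d -> C) a : \sum_c (c == a)%:R * F c = F a.
Proof.
by rewrite (bigD1 a) //= eqxx mul1r big1 ?addr0 // => c /negbTE ->; rewrite mul0r.
Qed.

Definition cc d n (B : 'I_n.+1 -> 'M[C]_d) (alpha : 'I_d -> C)
  (z : {ffun 'I_n -> 'I_d}) (a : 'I_d) : C :=
  let x := join_out z a in
  alpha (x ord0) * \prod_(k < n) Uent B k (x (inord k)) (x (inord k.+1)).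

Arguments cc {d n}.

Lemma Psi_eq d n B alpha q z a :
  Psi (R:=R) (d:=d) (n:=n) B alpha q (z, a) = cc B alpha z a * B ord_max q a.
Proof.
rewrite /Psi /cc /=.
have -> : join_out z a ord_max = a by rewrite /join_out ffunE unlift_none.
by [].
Qed.

Lemma qm_eq d n (B : 'I_n.+1 -> 'M[C]_d) alpha a :
  qm B alpha a = \sum_z `|cc B alpha z a| ^+ 2.
Proof.
apply: eq_bigr => z _; rewrite /cc /= normrM exprMn normr_prod prodrXl //.
Qed.

Lemma rhoA_eq d n (B : 'I_n.+1 -> 'M[C]_d) alpha
  (hB : B ord_max \is unitarymx) z z' a a' :
  rhoA B alpha (z, a) (z', a') =
  cc B alpha z a * (cc B alpha z' a')^* * (a == a')%:R.
Proof.
have := hB; rewrite -trmx_unitary => /unitarymxP /matrixP /(_ a a').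
rewrite !mxE => <-.
rewrite /rhoA /ptrace1 /rhoPsi mulr_sumr; apply: eq_bigr => q _ /=.
rewrite !Psi_eq !mxE rmorphM /=; ring.
Qed.

Lemma part1 d n (B : 'I_n.+1 -> 'M[C]_d) alpha (z0 : {ffun 'I_n -> 'I_d}) :
  exists psi : 'I_d -> {ffun 'I_n -> 'I_d} -> C,
    (forall a, \sum_z `|psi a z| ^+ 2 = 1) /\
    (forall z z' a, cc B alpha z a * (cc B alpha z' a)^* =
                    qm B alpha a * psi a z * (psi a z')^*).
Proof.
pose psi a z := if qm B alpha a == 0 then (z == z0)%:R
                else cc B alpha z a / sqrtC (qm B alpha a).
exists psi; split => [a|z z' a]; rewrite /psi.
- have [hq|hq] := eqVneq (qm B alpha a) 0.
    rewrite (bigD1 z0) //= eqxx normr1 expr1n big1 ?addr0 // => z /negbTE ->.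
    by rewrite normr0 expr0n.
  have q0 : 0 <= qm B alpha a by rewrite qm_eq sumr_ge0 // => w _; rewrite exprn_ge0.
  have hs : `|sqrtC (qm B alpha a)| ^+ 2 = qm B alpha a.
    by rewrite -normrX sqrtCK ger0_norm.
  under eq_bigr => w _ do rewrite normrM exprMn normfV exprVn hs.
  by rewrite -mulr_suml -qm_eq divff ?hq.
- have [hq|hq] := eqVneq (qm B alpha a) 0.
  have q0 : 0 <= qm B alpha a by rewrite qm_eq sumr_ge0 // => w _; rewrite exprn_ge0.
  move: hq; rewrite qm_eq => hq.
  have c0 w : cc B alpha w a = 0.
    have /eqP : `|cc B alpha w a| ^+ 2 = 0.
      by apply: (psumr_eq0P _ hq) => // w' _; rewrite exprn_ge0.
    by rewrite sqrf_eq0 normr_eq0 => /eqP.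
  by rewrite !c0 mul0r hq !mul0r.
  have hs : sqrtC (qm B alpha a) * (sqrtC (qm B alpha a))^* = qm B alpha a.
    have q0 : 0 <= qm B alpha a by rewrite qm_eq sumr_ge0 // => w _; rewrite exprn_ge0.
    by rewrite -normCK -normrX sqrtCK ger0_norm.
  have sn0 : sqrtC (qm B alpha a) != 0 by rewrite sqrtC_eq0 hq.
  rewrite fmorph_div /=.
  rewrite -[LHS]mulr1 -(divff hq) -{2}hs.
  field; rewrite sn0 /= conjC_eq0 sn0 //.
Qed.
End K.
Arguments sum_delta2 {R d}.
Arguments key {R T d V D rho f}.
Arguments part1 {R d n}.
Arguments rhoA_eq {R d n B alpha}.

Theorem theorem1 (R : realType) (d n : nat) (hd : (1 < d)%N)
  (B : 'I_n.+1 -> 'M[R[i]]_d) (alpha : 'I_d -> R[i])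
  (hB : forall k, B k \is unitarymx)
  (halpha : \sum_(x < d) `|alpha x| ^+ 2 = 1) :
  (exists psi : 'I_d -> {ffun 'I_n -> 'I_d} -> R[i],
      (forall a, \sum_(z : {ffun 'I_n -> 'I_d}) `|psi a z| ^+ 2 = 1) /\
      (forall (z z' : {ffun 'I_n -> 'I_d}) (a a' : 'I_d),
          rhoA B alpha (z, a) (z', a') =
          (a == a')%:R * qm B alpha a * psi a z * Num.conj (psi a z')))
  /\ vN_entropy d (rhoA B alpha) = vN_entropy d (rhoAm B alpha).
Proof.
have hBm := hB ord_max.
pose z0 : {ffun 'I_n -> 'I_d} := [ffun _ => Ordinal (ltnW hd)].
have [psi [hn hp]] := part1 B alpha z0.
have rA : forall z z' a a', rhoA B alpha (z,a) (z',a') =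
    (a == a')%:R * qm B alpha a * psi a z * (psi a z')^*.
  move=> z z' a a'; rewrite rhoA_eq //; have [<-|ne] := eqVneq a a'.
    by rewrite hp mulr1 mul1r.
  by rewrite !mulr0 !mul0r.
split; first by exists psi.
rewrite /vN_entropy; congr (- _).
have f0 : xlogd d (complex.Re (0 : R[i])) = 0 by rewrite /xlogd /= eqxx.
rewrite (key (f := fun l => xlogd d (complex.Re l)) (D := qm B alpha)
   (V := fun t a => (t.2 == a)%:R * psi a t.1)) //; last first.
- move=> [z b] [z' b'] /=; rewrite rA.
  rewrite (bigD1 b) //= big1 => [|a]; last first.
    by rewrite eq_sym => /negbTE ->; rewrite !mul0r.
  rewrite addr0 eqxx rmorphM /=.
  by have [e|ne] := eqVneq b b'; rewrite ?rmorph1 ?rmorph0; ring.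
- move=> a b.
  transitivity (\sum_z \sum_c ((c == a)%:R * psi a z)^* * ((c == b)%:R * psi b z)).
    by rewrite pair_bigA.
  under eq_bigr => z _ do rewrite sum_delta2.
  rewrite -mulr_sumr; have [<-|ne] := eqVneq a b; last by rewrite mul0r.
  rewrite mul1r -(hn a); apply: eq_bigr => z _; rewrite normCK mulrC //.
rewrite (key (f := fun l => xlogd d (complex.Re l)) (D := qm B alpha)
   (V := fun b a => (b == a)%:R : R[i])) //.
- move=> a b; have := sum_delta2 a b (1:R[i]) 1; rewrite rmorph1 !mulr1 => <-.
  by apply: eq_bigr => c _; rewrite !mulr1.
- move=> b b'; rewrite /rhoAm /ptrace1.
  under eq_bigr => z _ do rewrite rA.
  under eq_bigr => z _ do rewrite -mulrA -normCK.
  rewrite -mulr_sumr hn mulr1.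
  under [RHS]eq_bigr => a _ do rewrite conj_bool (eq_sym b a) -mulrA.
  by rewrite sum_delta eq_sym mulrC.
Qed.
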